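(* Let $n\ge 3$ and let $x_{i_1,D_1},\dots,x_{i_p,D_p}$ be partial conjugations, regarded as elements of $\mathrm{Out}^0(W_n)$. Then there exists a hypertree $\Theta\in\mathcal{HT}_n$ that carries every one of $x_{i_1,D_1},\dots,x_{i_p,D_p}$ if and only if these partial conjugations pairwise commute in $\mathrm{Out}^0(W_n)$.
   Context: $W_n=\langle a_1,\dots,a_n\mid a_1^2=\dots=a_n^2=1\rangle$ is the free product of $n$ copies of $\mathbb{Z}_2$; $[n]=\{1,\dots,n\}$. For $i\in[n]$ and a nonempty $D\subseteq[n]\setminus\{i\}$, the partial conjugation $x_{i,D}\in\mathrm{Aut}(W_n)$ sends $a_j\mapsto a_ia_ja_i$ for $j\in D$ and fixes $a_j$ for $j\notin D$. $\mathrm{Aut}^0(W_n)$ is the group of automorphisms sending each $a_j$ to a conjugate of itself (generated by partial conjugations), and $\mathrm{Out}^0(W_n)=\mathrm{Aut}^0(W_n)/\mathrm{Inn}(W_n)$. In $\mathrm{Out}^0(W_n)$ one has $x_{i,D}=x_{i,D^c}$ where $D^c=[n]\setminus(D\cup\{i\})$. A hypergraph on $[n]$ is a set $E$ of subsets (hyperedges) of $[n]$, each of size $\ge 2$. A simple walk from $v$ to $v'$ is a sequence $v=v_0,e_1,v_1,\dots,e_p,v_p=v'$ with $\{v_{t-1},v_t\}\subseteq e_t$, the $v_t$ pairwise distinct and the $e_t$ pairwise distinct. A hypertree on $[n]$ is a hypergraph on $[n]$ in which any two vertices are joined by a unique simple walk; $\mathcal{HT}_n$ is the set of hypertrees on $[n]$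 (labeled). A hypertree $\Theta$ carries $x_{i,D}$ if for every $d\in D$ and every $j\in[n]\setminus(D\cup\{i\})$ the simple walk in $\Theta$ from $d$ to $j$ passes through the vertex $i$; this depends only on the class of $x_{i,D}$ in $\mathrm{Out}^0(W_n)$. An element $\alpha\in\mathrm{Out}^0(W_n)$ is carried by $\Theta$ if it is a product of partial conjugations each carried by $\Theta$. *)

(* Defs.v *)
From mathcomp Require Import all_boot.
Set Implicit Arguments. Unset Strict Implicit. Unset Printing Implicit Defensive.

(* ---------- The group W_n = Z_2 * ... * Z_2, concretely ----------
   An element of W_n is represented by a word over 'I_n (letter j = a_j).
   Since a_j^2 = 1, the normal form is obtained by cancelling adjacent equal
   letters; [reduce] computes this normal form.  Two words represent the same
   element of W_n iff their reduced forms are equal.  The inverse of a word is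
   its reverse. *)

Fixpoint reduce (n : nat) (w : seq 'I_n) : seq 'I_n :=
  match w with
  | [::] => [::]
  | x :: s =>
      match reduce s with
      | y :: r => if x == y then r else x :: y :: r
      | [::] => [:: x]
      end
  end.

Definition wmul (n : nat) (u v : seq 'I_n) : seq 'I_n := reduce (u ++ v).

Definition ext (n : nat) (f : 'I_n -> seq 'I_n) (w : seq 'I_n) : seq 'I_n :=
  reduce (flatten (map f w)).

Definition pconj_valid (n : nat) (x : 'I_n * {set 'I_n}) : bool :=
  (x.1 \notin x.2) && (x.2 != set0).

Definition pconj_gen (n : nat) (x : 'I_n * {set 'I_n}) (j : 'I_n) : seq 'I_n :=
  if j \in x.2 then [:: x.1; j; x.1] else [:: j].

(* Two automorphisms, given by generator images f g, are equal in Out(W_n)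
   iff they differ by an inner automorphism: there is w in W_n with
   f(a_j) = w g(a_j) w^{-1} for every j. *)
Definition out_eq (n : nat) (f g : 'I_n -> seq 'I_n) : Prop :=
  exists w : seq 'I_n, forall j : 'I_n, reduce (f j) = reduce (w ++ g j ++ rev w).

Definition commute_out (n : nat) (x y : 'I_n * {set 'I_n}) : Prop :=
  out_eq (fun j => ext (pconj_gen x) (pconj_gen y j))
         (fun j => ext (pconj_gen y) (pconj_gen x j)).

Definition hypergraph (n : nat) (E : {set {set 'I_n}}) : bool :=
  [forall e in E, 1 < #|e|].

(* A simple walk v_0, e_1, v_1, ..., e_p, v_p, encoded as the vertex list
   vs = [v_0; ...; v_p] and edge list es = [e_1; ...; e_p]. *)
Definition simple_walk (n : nat) (E : {set {set 'I_n}}) (v v' : 'I_n)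
    (vs : seq 'I_n) (es : seq {set 'I_n}) : Prop :=
  [/\ size vs = (size es).+1,
      head v' vs = v,
      last v vs = v' &
     [/\ uniq vs,
      uniq es,
      all (fun e => e \in E) es &
      forall t, t < size es ->
        (nth v vs t \in nth set0 es t) && (nth v vs t.+1 \in nth set0 es t)]].

Definition hypertree (n : nat) (E : {set {set 'I_n}}) : Prop :=
  hypergraph E /\
  forall v v' : 'I_n,
    exists! p : seq 'I_n * seq {set 'I_n}, simple_walk E v v' p.1 p.2.

Definition carries (n : nat) (E : {set {set 'I_n}}) (x : 'I_n * {set 'I_n}) : Prop :=
  forall d j : 'I_n, d \in x.2 -> j \notin x.2 -> j != x.1 ->
    forall vs es, simple_walk E d j vs es -> x.1 \in vs.

(* Main.v *)
Require Import Defs.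
From mathcomp Require Import all_boot zify.
Set Implicit Arguments. Unset Strict Implicit. Unset Printing Implicit Defensive.


Section Words.
Variable n : nat.
Implicit Types (u v w r s : seq 'I_n) (a b m : 'I_n).

Definition push a r : seq 'I_n :=
  match r with
  | y :: r' => if a == y then r' else a :: y :: r'
  | [::] => [:: a]
  end.

Lemma reduce_cons a s : reduce (a :: s) = push a (reduce s).
Proof. by []. Qed.

Definition irr s := sorted (fun a b : 'I_n => a != b) s.

Lemma irr_push a r : irr r -> irr (push a r).
Proof.
case: r => [|y r] //= H.
case: ifP => [_|/negbT ne]; last by rewrite /= ne.
by case: r H => //= z r /andP[].
Qed.

Lemma irr_reduce s : irr (reduce s).
Proof. by elim: s => //= a s IH; rewrite -/(push _ _); apply: irr_push. Qed.

Lemma reduce_irr s : irr s -> reduce s = s.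
Proof.
elim: s => //= a s IH H.
have Hs : irr s by case: s H {IH} => //= b s /andP[].
rewrite (IH Hs); case: s H {IH Hs} => //= b s /andP[ne _].
by rewrite (negbTE ne).
Qed.

Lemma reduceK s : reduce (reduce s) = reduce s.
Proof. exact/reduce_irr/irr_reduce. Qed.

Lemma pushK a r : irr r -> push a (push a r) = r.
Proof.
case: r => [|y r] /=; first by rewrite eqxx.
case: (eqVneq a y) => [<-|ne] H /=.
  case: r H => [|z r] //= /andP[ne _].
  by rewrite (negbTE ne).
by rewrite eqxx.
Qed.

Lemma reduce_cat u v : reduce (u ++ v) = foldr push (reduce v) u.
Proof. by elim: u => //= a u ->. Qed.

Lemma irr_foldr r u : irr r -> irr (foldr push r u).
Proof. by move=> H; elim: u => //= a u IH; apply: irr_push. Qed.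

Lemma foldr_push r a s : irr r ->
  foldr push r (push a s) = push a (foldr push r s).
Proof.
move=> Hr; case: s => [|y s] //=.
case: ifP => [/eqP <-|] //=.
by rewrite pushK //; apply: irr_foldr.
Qed.

Lemma foldr_reduce r u : irr r -> foldr push r (reduce u) = foldr push r u.
Proof.
move=> Hr; elim: u => //= a u IH.
by rewrite -/(push _ _) foldr_push // IH.
Qed.

Lemma reduce_catl u v : reduce (reduce u ++ v) = reduce (u ++ v).
Proof. by rewrite !reduce_cat foldr_reduce // irr_reduce. Qed.

Lemma reduce_catr u v : reduce (u ++ reduce v) = reduce (u ++ v).
Proof. by rewrite !reduce_cat reduceK. Qed.

Lemma reduce_xx a v : reduce (a :: a :: v) = reduce v.
Proof. by rewrite !reduce_cons pushK // irr_reduce. Qed.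

Lemma reduce_catxx u a v : reduce (u ++ a :: a :: v) = reduce (u ++ v).
Proof. by rewrite -reduce_catr reduce_xx reduce_catr. Qed.

Lemma irr_rev s : irr (rev s) = irr s.
Proof.
rewrite /irr rev_sorted; case: s => //= x s; apply: eq_path => a b /=.
by rewrite eq_sym.
Qed.

Lemma rev_push a r : irr r -> reduce (rev (push a r)) = reduce (rev r ++ [:: a]).
Proof.
case: r => [|y r] //= H.
case: ifP => [/eqP <-|_]; last by rewrite rev_cons cats1.
by rewrite rev_cons -cats1 -catA /= reduce_catxx cats0.
Qed.

Lemma reduce_rev u : reduce (rev u) = rev (reduce u).
Proof.
elim: u => //= a u IH.
rewrite rev_cons -cats1 -reduce_catl IH -rev_push ?irr_reduce //.
by rewrite -/(push _ _) reduce_irr // irr_rev irr_push // irr_reduce.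
Qed.

Lemma reduce_conj w g :
  reduce (w ++ g ++ rev w) = reduce (reduce w ++ g ++ rev (reduce w)).
Proof.
rewrite -reduce_catl -[LHS]reduce_catr -[RHS]reduce_catr.
by rewrite -(reduce_catr g (rev w)) reduce_rev.
Qed.

Lemma irr_conj r m : irr (r ++ m :: rev r) = irr (m :: rev r).
Proof.
rewrite /irr sorted_cat_cons -/(irr _) -irr_rev rev_rcons /=.
by rewrite andbb.
Qed.

Lemma cent_aux r c m : irr (rcons r c) -> c != m ->
  reduce (rcons r c ++ m :: rev (rcons r c)) != [:: m].
Proof.
move=> Hr cm; rewrite reduce_irr; last first.
  rewrite irr_conj; move: Hr; rewrite -irr_rev !rev_rcons => Hr.
  by rewrite /= eq_sym cm; exact: Hr.
apply/eqP => /(congr1 size); rewrite size_cat /= size_rev size_rcons.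
by rewrite addSn addnS; case.
Qed.

Lemma irr_rcons r c : irr (rcons r c) -> irr r.
Proof.
move=> H; rewrite -irr_rev; move: H; rewrite -irr_rev rev_rcons.
by case: (rev r) => //= a s /andP[].
Qed.

Lemma cent w m : reduce (w ++ m :: rev w) = [:: m] ->
  reduce w = [::] \/ reduce w = [:: m].
Proof.
rewrite (reduce_conj w [:: m]); have := irr_reduce w.
case/lastP: (reduce w) => [|r b]; first by left.
move=> Hr; case: (eqVneq b m) => [Ebm|bm]; last by move/eqP; rewrite (negbTE (cent_aux Hr bm)).
subst b; rewrite rev_rcons -cats1 -catA /= reduce_catxx.
have Hr1 := irr_rcons Hr.
case/lastP: r Hr Hr1 => [|r c] Hr Hr1; first by right.
have cm : c != m.
  by move: Hr; rewrite -irr_rev !rev_rcons /= eq_sym => /andP[].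
by move/eqP; rewrite (negbTE (cent_aux Hr1 cm)).
Qed.


End Words.


Ltac crunch0 := repeat (first [
  match goal with
  | H : (?a \in ?S) = _ |- context [?a \in ?S] => rewrite H
  | H : is_true (?a \in ?S) |- context [?a \in ?S] => rewrite H
  | H : (?a == ?b) = false |- context [?a == ?b] => rewrite H
  | |- context [?a == ?a] => rewrite eqxx
  end | progress rewrite /= ]).
Ltac crunch := crunch0; try (move=> /eqP; rewrite ?eqseq_cons; crunch0; done).

Section Alg.
Variable n : nat.

Definition side (x : 'I_n * {set 'I_n}) (j : 'I_n) : {set 'I_n} :=
  if j \in x.2 then ~: (x.2 :|: [set x.1]) else x.2.

Definition compat (x y : 'I_n * {set 'I_n}) : bool :=
  (x.1 == y.1) || [forall k, ~~ ((k \in side x y.1) && (k \in side y x.1))].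

Lemma A2 (i j : 'I_n) (D E : {set 'I_n}) : i \notin D -> j \notin E ->
  compat (i, D) (j, E) -> commute_out (i, D) (j, E).
Proof.
move=> /negbTE hiD /negbTE hjE; rewrite /compat /=.
case: (eqVneq i j) => [eij _|ij /= /forallP hc].
  subst j.
  exists [::] => k /=; rewrite cats0 /ext /pconj_gen.
  case: (eqVneq k i) => [->|ki]; first by crunch.
  have ik : (i == k) = false by rewrite eq_sym (negbTE ki).
  move: ki => /negbTE ki.
  by case hkD: (k \in D); case hkE: (k \in E); crunch.
have hij : (i == j) = false by exact: negbTE ij.
have hji : (j == i) = false by rewrite eq_sym.
case hjD: (j \in D); case hiE: (i \in E);
  [exists [:: i; j; i; j] | exists [::] | exists [::] | exists [::]] => k;
  rewrite /ext /pconj_gen;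
  (case: (eqVneq k i) => [->|ki]; [by crunch|]);
  (case: (eqVneq k j) => [->|kj]; [by crunch|]).
all: have ik : (i == k) = false by rewrite eq_sym (negbTE ki).
all: have jk : (j == k) = false by rewrite eq_sym (negbTE kj).
all: move: ki kj => /negbTE ki /negbTE kj.
all: case hkD: (k \in D); case hkE: (k \in E); try by crunch.
all: by move: (hc k); rewrite /side /= hjD hiE ?inE; crunch.
Qed.

Lemma A1 (i j : 'I_n) (D E : {set 'I_n}) : i \notin D -> j \notin E ->
  commute_out (i, D) (j, E) -> compat (i, D) (j, E).
Proof.
move=> /negbTE hiD /negbTE hjE [w H]; rewrite /compat /=.
case: (eqVneq i j) => [//|ij] /=; apply/forallP => k; apply/negP => /andP[].
have hij : (i == j) = false by exact: negbTE ij.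
have hji : (j == i) = false by rewrite eq_sym.
rewrite /side /=.
case hjD: (j \in D); case hiE: (i \in E); rewrite ?inE.
- move=> /norP[/negbTE hkD /negbTE ki] /norP[/negbTE hkE /negbTE kj].
  have ik : (i == k) = false by rewrite eq_sym ki.
  have jk : (j == k) = false by rewrite eq_sym kj.
  have /cent: reduce (w ++ k :: rev w) = [:: k].
    by move: (H k); rewrite /ext /pconj_gen; crunch => ->.
  case=> hw.
    by move: (H i); rewrite reduce_conj hw /ext /pconj_gen; crunch.
    by move: (H i); rewrite reduce_conj hw /ext /pconj_gen; crunch.
- move=> /norP[/negbTE hkD /negbTE ki] hkE.
  have kj : (k == j) = false by apply/negbTE/eqP => e; rewrite e hjE in hkE.
  have ik : (i == k) = false by rewrite eq_sym ki.
  have jk : (j == k) = false by rewrite eq_sym kj.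
  have /cent: reduce (w ++ i :: rev w) = [:: i].
    by move: (H i); rewrite /ext /pconj_gen; crunch => ->.
  case=> hw.
    by move: (H k); rewrite reduce_conj hw /ext /pconj_gen; crunch.
  by move: (H j); rewrite reduce_conj hw /ext /pconj_gen; crunch.
- move=> hkD /norP[/negbTE hkE /negbTE kj].
  have ki : (k == i) = false by apply/negbTE/eqP => e; rewrite e hiD in hkD.
  have ik : (i == k) = false by rewrite eq_sym ki.
  have jk : (j == k) = false by rewrite eq_sym kj.
  have /cent: reduce (w ++ j :: rev w) = [:: j].
    by move: (H j); rewrite /ext /pconj_gen; crunch => ->.
  case=> hw.
    by move: (H k); rewrite reduce_conj hw /ext /pconj_gen; crunch.
  by move: (H i); rewrite reduce_conj hw /ext /pconj_gen; crunch.
- move=> hkD hkE.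
  have ki : (k == i) = false by apply/negbTE/eqP => e; rewrite e hiD in hkD.
  have kj : (k == j) = false by apply/negbTE/eqP => e; rewrite e hjE in hkE.
  have ik : (i == k) = false by rewrite eq_sym ki.
  have jk : (j == k) = false by rewrite eq_sym kj.
  have /cent: reduce (w ++ i :: rev w) = [:: i].
    by move: (H i); rewrite /ext /pconj_gen; crunch => ->.
  case=> hw.
    by move: (H k); rewrite reduce_conj hw /ext /pconj_gen; crunch.
  by move: (H j); rewrite reduce_conj hw /ext /pconj_gen; crunch.
Qed.
End Alg.


Section Walks.
Variable n : nat.
Variable E : {set {set 'I_n}}.
Implicit Types (v a b : 'I_n) (vs : seq 'I_n) (es : seq {set 'I_n}).

Definition edges_ok vs es :=
  forall t x, t < size es -> (nth x vs t \in nth set0 es t) && (nth x vs t.+1 \in nth set0 es t).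

Lemma swP v v' vs es : simple_walk E v v' vs es <->
  [/\ size vs = (size es).+1, head v' vs = v, last v vs = v' &
     [/\ uniq vs, uniq es, all (fun e => e \in E) es & edges_ok vs es]].
Proof.
split=> -[hs hh hl [hu hue ha he]]; split => //; split => // t.
  move=> x ht.
  have h1 : t < size vs by rewrite hs ltnS ltnW.
  have h2 : t.+1 < size vs by rewrite hs.
  by rewrite (set_nth_default v x h1) (set_nth_default v x h2); apply: he.
by move=> ht; apply: he.
Qed.

Lemma sw_rev v v' vs es : simple_walk E v v' vs es ->
  simple_walk E v' v (rev vs) (rev es).
Proof.
move/swP=> [hs hh hl [hu hue ha he]]; apply/swP; split.
- by rewrite !size_rev.
- by case/lastP: vs hs hl {hh hu he} => //= s x _; rewrite rev_rcons last_rcons.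
- by case: vs hs hh {hl hu he} => //= y s _ <-; rewrite rev_cons last_rcons.
split; rewrite ?rev_uniq ?all_rev //.
move=> t x; rewrite size_rev => ht.
have h1 : size es - t.+1 < size es by rewrite ltn_subrL; case: (size es) ht.
have := he _ x h1; rewrite andbC.
rewrite !nth_rev ?hs ?size_rev //; last by rewrite ltnS ltnW.
by rewrite subSS -subSn // subSS.
Qed.

Lemma last_drop T (s : seq T) k (x y : T) : k < size s -> last x (drop k s) = last y s.
Proof.
elim: s k x y => // z s IH [|k] x y /= hk; first by [].
exact: IH.
Qed.

Lemma sw_drop v v' vs es a : simple_walk E v v' vs es -> a \in vs ->
  simple_walk E a v' (drop (index a vs) vs) (drop (index a vs) es).
Proof.
move/swP=> [hs hh hl [hu hue ha he]] av; apply/swP.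
have hk : index a vs < size vs by rewrite index_mem.
have hk' : index a vs <= size es by rewrite -ltnS -hs.
split.
- by rewrite !size_drop hs subSn.
- by rewrite -nth0 nth_drop addn0 nth_index.
- by rewrite -hl; apply: last_drop.
split; first exact: drop_uniq.
- exact: drop_uniq.
- by apply/allP => e /mem_drop; apply: (allP ha).
move=> t x; rewrite size_drop ltn_subRL => ht.
by rewrite !nth_drop addnS; apply: he.
Qed.

Lemma sw_take v v' vs es a : simple_walk E v v' vs es -> a \in vs ->
  simple_walk E v a (take (index a vs).+1 vs) (take (index a vs) es).
Proof.
move/swP=> [hs hh hl [hu hue ha he]] av; apply/swP.
have hk : index a vs < size vs by rewrite index_mem.
have hk' : index a vs <= size es by rewrite -ltnS -hs.
split.
- by rewrite !size_takel.
- by case: vs hs hh {hl hu he av hk hk'}.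
- rewrite -(nth_last v) size_takel // nth_take //.
  exact: nth_index.
split; first exact: take_uniq.
- exact: take_uniq.
- by apply/allP => e /mem_take; apply: (allP ha).
move=> t x; rewrite size_takel // => ht.
have h1 : t < (index a vs).+1 by rewrite ltnS ltnW.
have h2 : t.+1 < (index a vs).+1 by rewrite ltnS.
rewrite (nth_take _ h1) (nth_take _ h2) (nth_take _ ht).
by apply: he; apply: leq_trans hk'.
Qed.

Lemma sw_triv v : simple_walk E v v [:: v] [::].
Proof. by split => //; split. Qed.

Lemma sw_loop v vs es : simple_walk E v v vs es -> vs = [:: v] /\ es = [::].
Proof.
move=> [hs hh hl [hu _ _ _]].
case: vs hs hh hl hu => // y [|z s] /=; first by case: es => // _ <-.
move=> _ <- hl /andP[hy _]; move: hy.
by rewrite -{1}hl mem_last.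
Qed.

Lemma last_nonnil T (s : seq T) (x y : T) : 0 < size s -> last x s = last y s.
Proof. by case: s. Qed.

Lemma sw_cons p w u vs es : simple_walk E p w vs es -> [set u; p] \in E ->
  u \notin vs -> simple_walk E u w (u :: vs) ([set u; p] :: es).
Proof.
move/swP=> [hs hh hl [hu hue ha he]] hE uvs; apply/swP; split => //=.
- by rewrite hs.
- by rewrite -hl; apply: last_nonnil; rewrite hs.
split => //=.
- by rewrite uvs hu.
- rewrite hue andbT; apply/negP => /(nthP set0) [t ht het].
  have h1 : t < size vs by rewrite hs ltnS ltnW.
  have h2 : t.+1 < size vs by rewrite hs.
  have /andP[] := he t u ht; rewrite het !inE.
  have /negbTE -> : nth u vs t != u by apply: contraNneq uvs => <-; apply: mem_nth.
  have /negbTE -> : nth u vs t.+1 != u by apply: contraNneq uvs => <-; apply: mem_nth.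
  move=> /eqP e1 /eqP e2.
  by move: (nth_uniq u h1 h2 hu); rewrite e1 e2 eqxx => /esym /eqP /n_Sn.
- by rewrite hE.
move=> [|t] x /= ht.
  rewrite !inE eqxx /=; case: vs hs hh {hl hu he uvs} => //= y s _ ->.
  by rewrite eqxx orbT.
exact: he.
Qed.

Lemma sw_cut v v' vs es (i : 'I_n) (D : {set 'I_n}) : simple_walk E v v' vs es ->
  (forall e, e \in E -> forall a b, a \in e -> b \in e -> a != i -> b != i ->
     (a \in D) = (b \in D)) ->
  v \in D -> v' \notin D -> i \in vs.
Proof.
move/swP=> [hs hh hl [hu hue ha he]] hcut vD; apply: contraNT => ivs.
have H : forall t, t < size vs -> nth v vs t \in D.
  elim=> [|t IH] ht; first by case: (vs) hh ht => //= y s ->.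
  have ht' : t < size es by rewrite -ltnS -hs.
  have /andP[h1 h2] := he t v ht'.
  have hE : nth set0 es t \in E by apply: (allP ha); apply: mem_nth.
  rewrite -(hcut _ hE _ _ h1 h2) ?IH 1?ltnW //.
    by apply: contraNneq ivs => <-; apply: mem_nth; rewrite ltnW.
  by apply: contraNneq ivs => <-; apply: mem_nth.
by rewrite -hl -nth_last; apply: H; rewrite hs.
Qed.

Lemma sw_tail u x v s e es : simple_walk E u v (u :: x :: s) (e :: es) ->
  simple_walk E x v (x :: s) es.
Proof.
move/swP=> [hs hh hl [hu hue ha he]]; apply/swP; split => //; first by move: hs => /= /eqP; rewrite eqSS => /eqP ->.
split; [by case/andP: hu | by case/andP: hue | by case/andP: ha | ].
by move=> t y ht; apply: (he t.+1 y).
Qed.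

Lemma sw_first u x v s e es : simple_walk E u v (u :: x :: s) (e :: es) ->
  [/\ e \in E, u \in e, x \in e & u != x].
Proof.
move/swP=> [hs hh hl [hu hue ha he]].
case/andP: (he 0 u erefl) => /= h1 h2; split => //.
- by case/andP: ha.
by case/andP: hu; rewrite inE negb_or => /andP[].
Qed.
End Walks.


Section Fwd.
Variable n : nat.
Implicit Types (E : {set {set 'I_n}}).

Lemma carries_side E (i : 'I_n) (D : {set 'I_n}) : carries E (i, D) ->
  forall d j vs es, d != i -> j != i -> (d \in D) != (j \in D) ->
  simple_walk E d j vs es -> i \in vs.
Proof.
move=> hc d j vs es di ji; case hd: (d \in D); case hj: (j \in D) => // _ hw.
  by apply: (hc d j) hw; rewrite ?hd ?hj.
by rewrite -mem_rev; apply: (hc j d) (sw_rev hw); rewrite ?hd ?hj.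
Qed.

Lemma index_take_lt (T : eqType) (s : seq T) m x : x \in take m s -> index x s < m.
Proof.
move=> hx; rewrite -(cat_take_drop m s) index_cat hx.
have := index_mem x (take m s); rewrite hx => h; apply: (leq_trans h).
by rewrite size_take_min geq_minl.
Qed.

Lemma B_compat E (x y : 'I_n * {set 'I_n}) : hypertree E -> carries E x -> carries E y ->
  x.1 \notin x.2 -> y.1 \notin y.2 -> compat x y.
Proof.
case: x y => i D [j F] [_ hT] hcx hcy /= hiD hjF; rewrite /compat /=.
case: (eqVneq i j) => //= ij; apply/forallP => k; apply/negP => /andP[].
rewrite /side /=.
have hk1 : k \in (if j \in D then ~: (D :|: [set i]) else D) -> k != i /\ (k \in D) != (j \in D).
  case: (j \in D); rewrite ?inE ?negb_or.
    by case/andP=> kD ki; split => //; rewrite (negbTE kD).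
  by move=> kD; rewrite kD; split => //; apply/eqP => eki; move: hiD; rewrite -eki kD.
have hk2 : k \in (if i \in F then ~: (F :|: [set j]) else F) -> k != j /\ (k \in F) != (i \in F).
  case: (i \in F); rewrite ?inE ?negb_or.
    by case/andP=> kF kj; split => //; rewrite (negbTE kF).
  by move=> kF; rewrite kF; split => //; apply/eqP => ekj; move: hjF; rewrite -ekj kF.
move=> /hk1 [ki kD] /hk2 [kj kF].
have [[vs es] [hw _]] := hT k j.
have ivs : i \in vs by apply: (carries_side hcx) hw; rewrite // eq_sym.
have hw2 := sw_take hw ivs.
have jin : j \in take (index i vs).+1 vs by apply: (carries_side hcy) hw2; rewrite // eq_sym.
have h1 := index_take_lt jin; rewrite ltnS in h1.
case: hw => hs hh hl [hu _ _ _].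
have hj : index j vs = (size vs).-1.
  by rewrite -hl -(nth_last k) index_uniq // hs.
have hi : index i vs <= (size vs).-1 by rewrite -ltnS prednK ?index_mem // hs.
have e : index i vs = index j vs by apply/eqP; rewrite eqn_leq h1 hj hi.
by move: ij; rewrite -(nth_index k ivs) e nth_index ?eqxx // -index_mem hj hs.
Qed.

Theorem forward (xs : seq ('I_n * {set 'I_n})) (hxs : all (@pconj_valid n) xs) E :
  hypertree E -> (forall x, x \in xs -> carries E x) ->
  forall x y, x \in xs -> y \in xs -> commute_out x y.
Proof.
move=> hT hc [i D] [j F] hx hy.
have /andP[hiD _] := allP hxs _ hx; have /andP[hjF _] := allP hxs _ hy.
apply: A2 => //; apply: (@B_compat E) => //; [exact: hc hx | exact: hc hy].
Qed.
End Fwd.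


Section Tree.
Variable n : nat.
Variable par : 'I_n -> 'I_n.
Variable rk : 'I_n -> nat.
Variable r : 'I_n.
Hypothesis hpr : par r = r.
Hypothesis hrk : forall v, v != r -> rk v < rk (par v).

Definition TE : {set {set 'I_n}} := [set [set v; par v] | v in [set v | v != r]].

Lemma par_neq v : v != r -> par v != v.
Proof. by move=> /hrk h; apply/eqP => e; rewrite e ltnn in h. Qed.

Lemma rk_par v : rk v <= rk (par v).
Proof. by case: (eqVneq v r) => [->|/hrk /ltnW //]; rewrite hpr. Qed.

Lemma TE_edge v : v != r -> [set v; par v] \in TE.
Proof. by move=> hv; apply/imsetP; exists v; rewrite ?inE. Qed.

Definition adj (a b : 'I_n) := (a != r /\ b = par a) \/ (b != r /\ a = par b).

Lemma TE_adj e a b : e \in TE -> a \in e -> b \in e -> a != b -> adj a b.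
Proof.
case/imsetP=> v; rewrite inE => hv -> {e}; rewrite !inE.
by case/orP=> /eqP -> /orP [] /eqP ->; rewrite ?eqxx //= => _;
  [left | right].
Qed.

Lemma TE_eq e a b : e \in TE -> a \in e -> b \in e -> a != b -> e = [set a; b].
Proof.
case/imsetP=> v; rewrite inE => hv -> {e}; rewrite !inE.
by case/orP=> /eqP -> /orP [] /eqP ->; rewrite ?eqxx //= => _; rewrite setUC.
Qed.

Lemma TE_hyper : hypergraph TE.
Proof.
apply/forall_inP => e /imsetP [v]; rewrite inE => hv ->.
by rewrite cards2 eq_sym par_neq.
Qed.


Lemma sw_adj v v' vs es t x : simple_walk TE v v' vs es -> t.+1 < size vs ->
  adj (nth x vs t) (nth x vs t.+1).
Proof.
move/swP=> [hs hh hl [hu hue ha he]] ht.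
have ht' : t < size es by rewrite -ltnS -hs.
case/andP: (he t x ht') => h1 h2.
apply: (TE_adj _ h1 h2); first by apply: (allP ha); apply: mem_nth.
have h3 : t < size vs by apply: ltnW.
by rewrite nth_uniq // ltn_eqF.
Qed.

Definition N := \max_(v : 'I_n) rk v.
Lemma rk_N v : rk v <= N.
Proof. exact: leq_bigmax. Qed.

Lemma walk_step p w u vs es : simple_walk TE p w vs es -> [set u; p] \in TE ->
  exists vs' es', simple_walk TE u w vs' es'.
Proof.
move=> hw hE; case uvs: (u \in vs).
  by exists (drop (index u vs) vs), (drop (index u vs) es); exact: sw_drop hw uvs.
by exists (u :: vs), ([set u; p] :: es); apply: sw_cons; rewrite ?uvs.
Qed.

Lemma to_root v : exists vs es, simple_walk TE v r vs es.
Proof.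
suff H : forall k v, N - rk v <= k -> exists vs es, simple_walk TE v r vs es.
  exact: (H _ v (leqnn _)).
elim=> [|k IH] {}v hk; case: (eqVneq v r) => [->|hv];
  try by exists [:: r], [::]; apply: sw_triv.
  have h1 := hrk hv; have h2 := rk_N (par v); lia.
have [vs [es hw]] : exists vs es, simple_walk TE (par v) r vs es.
  apply: IH; have h1 := hrk hv; have h2 := rk_N (par v); lia.
by apply: walk_step hw (TE_edge hv).
Qed.

Lemma walk_ex u w : exists vs es, simple_walk TE u w vs es.
Proof.
suff H : forall k u, N - rk u <= k -> exists vs es, simple_walk TE u w vs es.
  exact: (H _ u (leqnn _)).
elim=> [|k IH] {}u hk; case: (eqVneq u r) => [->|hv];
  try by have [vs [es hw]] := to_root w; exists (rev vs), (rev es); apply: sw_rev.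
  have h1 := hrk hv; have h2 := rk_N (par u); lia.
have [vs [es hw]] : exists vs es, simple_walk TE (par u) w vs es.
  apply: IH; have h1 := hrk hv; have h2 := rk_N (par u); lia.
by apply: walk_step hw (TE_edge hv).
Qed.

Definition desc x w := exists k, iter k par w = x.

Lemma desc_refl x : desc x x.
Proof. by exists 0. Qed.

Lemma desc_par x w : desc x (par w) -> desc x w.
Proof. by case=> k hk; exists k.+1; rewrite iterSr. Qed.

Lemma desc_rk x w : desc x w -> rk w <= rk x.
Proof.
case=> k; elim: k w => [|k IH] w; first by move=> /= ->.
by rewrite iterSr => h; apply: leq_trans (rk_par w) (IH _ h).
Qed.

Lemma desc_inv x w : desc x w -> w = x \/ desc x (par w).
Proof.
case=> [[|k]] h; first by left.
by right; exists k; rewrite -iterSr.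
Qed.

Lemma trap u v s es x1 : simple_walk TE u v (u :: x1 :: s) es ->
  x1 != r -> par x1 = u -> desc x1 v.
Proof.
move=> hw hx1 hp.
have [hs hh hl [hu _ _ _]] := hw.
have us : u \notin x1 :: s by case/andP: hu.
have H : forall t, t < size (x1 :: s) -> desc x1 (nth x1 (x1 :: s) t).
  elim=> [|t IH] ht; first exact: desc_refl.
  have := sw_adj x1 hw (ht : t.+2 < size (u :: x1 :: s)).
  rewrite -[nth _ (u :: _) t.+1]/(nth x1 (x1 :: s) t) -[nth _ (u :: _) t.+2]/(nth x1 (x1 :: s) t.+1).
  have := IH (ltnW ht).
  move: (nth x1 (x1 :: s) t) (nth x1 (x1 :: s) t.+1) (mem_nth x1 ht) => y z hz hy.
  case=> [[_ ez]|[_ hyz]].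
    case: (desc_inv hy) => [ey|]; last by rewrite ez.
    have ezu : z = u by rewrite ez ey hp.
    by rewrite -ezu hz in us.
  by apply: desc_par; rewrite -hyz.
have := H (size s) (leqnn _); rewrite -last_nth => h; rewrite -hl; exact: h.
Qed.

Lemma escape u v s es x1 x2 : simple_walk TE u v (u :: x2 :: s) es ->
  x1 != r -> par x1 = u -> x2 != x1 -> ~ desc x1 v.
Proof.
move=> hw hx1 hp hx12.
have [hs hh hl [hu _ _ _]] := hw.
have us : u \notin x2 :: s by case/andP: hu.
have hru : rk x1 < rk u by rewrite -hp; apply: hrk.
have H : forall t, t < size (x2 :: s) -> ~ desc x1 (nth x2 (x2 :: s) t).
  elim=> [|t IH] ht.
    have := sw_adj x2 hw (ht : 1 < size (u :: x2 :: s)); rewrite /= => hadj hd.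
    case: hadj => [[hu' ex2]|[hx2 eu]].
      have := desc_rk hd; have := hrk hu'; rewrite -ex2.
      by move=> h1 h2; have := leq_ltn_trans h2 (ltn_trans hru h1); rewrite ltnn.
    case: (desc_inv hd) => [e|hd']; first by rewrite e eqxx in hx12.
    by have := desc_rk hd'; rewrite -eu leqNgt hru.
  have := sw_adj x2 hw (ht : t.+2 < size (u :: x2 :: s)).
  rewrite -[nth _ (u :: _) t.+1]/(nth x2 (x2 :: s) t) -[nth _ (u :: _) t.+2]/(nth x2 (x2 :: s) t.+1).
  have := IH (ltnW ht).
  move: (nth x2 (x2 :: s) t) (nth x2 (x2 :: s) t.+1) (mem_nth x2 (ltnW ht)) (mem_nth x2 ht) => y z hyin hz hy.
  case=> [[_ ->]|[hzr hyz]].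
    by move=> /desc_par.
  move=> hd; case: (desc_inv hd) => [ez|]; last by rewrite -hyz.
  by rewrite ez hp in hyz; rewrite -hyz hyin in us.
have := H (size s) (leqnn _); rewrite -last_nth => h; rewrite -hl; exact: h.
Qed.

Lemma sw_uniq_TE vs1 es1 vs2 es2 u v : simple_walk TE u v vs1 es1 ->
  simple_walk TE u v vs2 es2 -> vs1 = vs2 /\ es1 = es2.
Proof.
elim: vs1 u es1 vs2 es2 => [|y s1 IH] u es1 vs2 es2 h1 h2; first by case: h1.
have [hs1 hh1 hl1 _] := h1; simpl in hh1; subst y.
case: s1 IH hs1 hl1 h1 => [|x1 t1] IH hs1 hl1 h1.
  case: es1 hs1 h1 => // _ h1; move: hl1 => /= hv; rewrite -hv in h2.
  by case: (sw_loop h2) => -> ->.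
case: es1 hs1 h1 => // e1 f1 _ h1.
have [hs2 hh2 hl2 _] := h2.
case: vs2 hs2 hh2 hl2 h2 => // y2 s2 hs2 hh2 hl2 h2; simpl in hh2; subst y2.
case: s2 hs2 hl2 h2 => [|x2 t2] hs2 hl2 h2.
  by move: hl2 => /= hv; rewrite -hv in h1; case: (sw_loop h1).
case: es2 hs2 h2 => // e2 f2 _ h2.
have [he1 hu1 hx1 ux1] := sw_first h1.
have [he2 hu2 hx2 ux2] := sw_first h2.
case: (eqVneq x1 x2) => [ex|nx].
  subst x2.
  have ee : e1 = e2 by rewrite (TE_eq he1 hu1 hx1 ux1) (TE_eq he2 hu2 hx2 ux2).
  subst e2.
  by case: (IH _ _ _ _ (sw_tail h1) (sw_tail h2)) => -> ->.
case: (TE_adj he1 hu1 hx1 ux1) => [[hur ex1]|[hx1r ep1]].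
  case: (TE_adj he2 hu2 hx2 ux2) => [[_ ex2]|[hx2r ep2]].
    by rewrite ex1 ex2 eqxx in nx.
  exfalso; apply: (escape h1 hx2r (esym ep2) nx).
  exact: (trap h2 hx2r (esym ep2)).
exfalso; apply: (escape h2 hx1r (esym ep1)); first by rewrite eq_sym.
exact: (trap h1 hx1r (esym ep1)).
Qed.

Lemma TE_hypertree : hypertree TE.
Proof.
split; first exact: TE_hyper.
move=> u v; have [vs [es hw]] := walk_ex u v.
exists (vs, es); split => // -[vs' es'] /= h.
by case: (sw_uniq_TE hw h) => -> ->.
Qed.

Lemma TE_carries (i : 'I_n) (D : {set 'I_n}) :
  (forall v, v != r -> [\/ (v \in D) = (par v \in D), i = v | i = par v]) ->
  carries TE (i, D).
Proof.
move=> hloc d j hd hj ji vs es hw; apply: (sw_cut hw _ hd hj).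
move=> e /imsetP [v]; rewrite inE => hv -> a b; rewrite !inE.
have key : v != i -> par v != i -> (v \in D) = (par v \in D).
  by move=> h1 h2; case: (hloc v hv) => // e'; [rewrite e' eqxx in h1 | rewrite e' eqxx in h2].
by case/orP=> /eqP -> /orP [] /eqP -> ai bi //; rewrite key.
Qed.
End Tree.


Section Constr.
Variable n : nat.
Implicit Types (S : {set 'I_n}) (x : 'I_n * {set 'I_n}).

Definition Dc x : {set 'I_n} := ~: (x.2 :|: [set x.1]).
Definition sf S x := (x.2 :&: S == set0) || (S \subset x.2 :|: [set x.1]).
Definition nt S x := (x.1 \in S) && ~~ sf S x.
Definition msz S x := minn #|x.2 :&: S| #|Dc x :&: S|.

Lemma sf_same S x a b : sf S x -> a \in S -> b \in S -> a != x.1 -> b != x.1 ->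
  (a \in x.2) = (b \in x.2).
Proof.
case/orP => [/eqP h|/subsetP h] aS bS ai bi.
  have ha : a \notin x.2.
    apply/negP => ad; have : a \in x.2 :&: S by rewrite inE ad.
    by rewrite h inE.
  have hb : b \notin x.2.
    apply/negP => bd; have : b \in x.2 :&: S by rewrite inE bd.
    by rewrite h inE.
  by rewrite (negbTE ha) (negbTE hb).
have := h a aS; have := h b bS; rewrite !inE (negbTE ai) (negbTE bi) !orbF.
by move=> -> ->.
Qed.

Lemma sf_sub S S' x : sf S x -> S' \subset S -> sf S' x.
Proof.
move=> /orP [/eqP h|h] hS; apply/orP; [left|right].
  apply/eqP/setP => k; rewrite !inE; apply/negP => /andP[kd kS].
  have : k \in x.2 :&: S by rewrite inE kd (subsetP hS).
  by rewrite h inE.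
exact: subset_trans hS h.
Qed.

Lemma side_notin x j : x.1 \notin x.2 -> j \notin side x j.
Proof.
move=> hv; rewrite /side; case: ifP => [hj|/negbT //].
by rewrite !inE hj.
Qed.

Lemma center_notin_side x j : x.1 \notin x.2 -> x.1 \notin side x j.
Proof. by move=> hv; rewrite /side; case: ifP => //; rewrite !inE eqxx orbT. Qed.

Lemma notin_side x j k : x.1 \notin x.2 -> k \notin side x j -> k != x.1 -> j != x.1 ->
  (k \in x.2) = (j \in x.2).
Proof.
move=> hv; rewrite /side; case: ifP => hj; last by move=> /negbTE.
by rewrite !inE negbK => /orP [-> //|] /eqP ->; rewrite eqxx.
Qed.

Lemma msz_side S x j : msz S x <= #|side x j :&: S|.
Proof. by rewrite /msz /side; case: ifP => _; rewrite ?geq_minl ?geq_minr. Qed.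


Lemma part x k : x.1 \notin x.2 -> k != x.1 -> (k \in x.2) != (k \in Dc x).
Proof. by move=> hv hk; rewrite /Dc !inE (negbTE hk) orbF; case: (k \in x.2). Qed.

Lemma Dc_center x : x.1 \notin Dc x.
Proof. by rewrite /Dc !inE eqxx orbT. Qed.

Variable xs : seq ('I_n * {set 'I_n}).
Hypothesis hval : forall x, x \in xs -> x.1 \notin x.2.
Hypothesis hcomp : forall x y, x \in xs -> y \in xs -> compat x y.

Lemma comp_side x y k : x \in xs -> y \in xs -> x.1 != y.1 ->
  k \in side x y.1 -> k \notin side y x.1.
Proof.
move=> hx hy hxy hk; have := hcomp hx hy; rewrite /compat (negbTE hxy) /=.
by move/forallP/(_ k); rewrite hk.
Qed.

Definition goodtree S (par : 'I_n -> 'I_n) (rk : 'I_n -> nat) (r : 'I_n) :=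
  [/\ r \in S, par r = r,
   forall v, v \in S -> v != r -> par v \in S /\ rk v < rk (par v) &
   forall x v, x \in xs -> v \in S -> v != r ->
     [\/ (v \in x.2) = (par v \in x.2), x.1 = v | x.1 = par v]].

Lemma star S : S != set0 -> (forall x, x \in xs -> x.1 \notin S -> sf S x) ->
  ~~ has (nt S) xs -> exists par rk r, goodtree S par rk r.
Proof.
move=> hS h1 /hasPn hnt; have [r0 hr0] := set0Pn S hS.
exists (fun _ => r0), (fun v => nat_of_bool (v == r0)), r0; split => //.
  by move=> v vS vr; rewrite (negbTE vr) eqxx.
move=> x v hx vS vr.
case: (eqVneq x.1 v) => [e|xv]; first by apply: Or32.
case: (eqVneq x.1 r0) => [e|xr]; first by apply: Or33.
apply: Or31; apply: (@sf_same S) => //; rewrite 1?eq_sym //.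
case xS: (x.1 \in S); last by apply: (h1 x hx); rewrite xS.
by have := hnt x hx; rewrite /nt xS negbK.
Qed.

Lemma claim k S : #|S| <= k -> S != set0 ->
  (forall x, x \in xs -> x.1 \notin S -> sf S x) ->
  exists par rk r, goodtree S par rk r.
Proof.
elim: k S => [|k IH] S hk hS h1.
  by move: hS; rewrite -card_gt0 ltnNge hk.
case: (boolP (has (nt S) xs)) => hhas; last exact: star.
have ex : exists m, has (fun x => nt S x && (msz S x == m)) xs.
  case/hasP: hhas => x hx hnt; exists (msz S x); apply/hasP; exists x => //.
  by rewrite hnt eqxx.
case: (ex_minnP ex) => m hm hmin.
case/hasP: hm => x0 hx0 /andP[hnt0 /eqP hm0].
have hmin' : forall x, x \in xs -> nt S x -> m <= msz S x.
  by move=> x hx hnt; apply: hmin; apply/hasP; exists x => //; rewrite hnt eqxx.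
have hv0 := hval hx0.
case/andP: hnt0 => i0S /norP [hD0 hDc0].
have Dc0S : Dc x0 :&: S != set0.
  case/subsetPn: hDc0 => z zS zn; apply/set0Pn; exists z.
  by rewrite /Dc !inE zS andbT; rewrite !inE in zn.
have [Sg [Sg' [hSS cardA]]] : exists Sg Sg',
    ((Sg = x0.2 /\ Sg' = Dc x0) \/ (Sg = Dc x0 /\ Sg' = x0.2)) /\ #|Sg :&: S| = m.
  rewrite -hm0 /msz /minn; case: ifP => _;
    [exists x0.2, (Dc x0) | exists (Dc x0), x0.2]; (split; [|by []]).
    by left.
  by right.
set A := Sg :&: S.
have A0 : A != set0 by rewrite /A; case: hSS => [[-> _]|[-> _]].
have [l lA] := set0Pn A A0.
have lS : l \in S by move: lA; rewrite inE => /andP[].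
have lSg : l \in Sg by move: lA; rewrite inE => /andP[].
have Sgi0 : forall v, v \in Sg -> v != x0.1.
  move=> v; case: hSS => [[-> _]|[-> _]] vD.
    by apply: contraNneq hv0 => <-.
  by apply: contraNneq (Dc_center x0) => <-.
have li0 : l != x0.1 by apply: Sgi0.
have sideSg : forall v, v \in Sg -> side x0 v = Sg'.
  move=> v; rewrite /side; case: hSS => [[-> ->]|[-> ->]] vD; first by rewrite vD.
  by move: vD; rewrite /Dc !inE negb_or => /andP[/negbTE ->].
have sideSg' : forall v, v \in Sg' -> side x0 v = Sg.
  move=> v; rewrite /side; case: hSS => [[-> ->]|[-> ->]] vD; last by rewrite vD.
  by move: vD; rewrite /Dc !inE negb_or => /andP[/negbTE ->].
have partS : forall v, v != x0.1 -> v \notin Sg' -> v \in Sg.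
  move=> v vi; have := part hv0 vi.
  by case: hSS => [[-> ->]|[-> ->]]; case: (v \in x0.2); case: (v \in Dc x0).
have F1 : forall x, x \in xs -> x.1 \in A -> sf S x.
  move=> x hx xA; apply/negPn/negP => hnsf.
  have xS : x.1 \in S by move: xA; rewrite inE => /andP[].
  have xSg : x.1 \in Sg by move: xA; rewrite inE => /andP[].
  have hnt : nt S x by rewrite /nt xS hnsf.
  have h2 := hmin' x hx hnt.
  have h3 := msz_side S x x0.1.
  have xi0 : x0.1 != x.1 by rewrite eq_sym; apply: Sgi0.
  have sub : side x x0.1 :&: S \subset A :\ x.1.
    apply/subsetP => z; rewrite !inE => /andP[zs zS].
    have zn : z \notin side x0 x.1.
      by apply/negP => zz; have := comp_side hx0 hx xi0 zz; rewrite zs.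
    rewrite (sideSg _ xSg) in zn.
    have zi0 : z != x0.1.
      by apply/eqP => e; move: zs; rewrite e (negbTE (side_notin _ (hval hx))).
    have zx : z != x.1.
      by apply/eqP => e; move: zs; rewrite e (negbTE (center_notin_side _ (hval hx))).
    by rewrite zx zS partS.
  have c1 := subset_leq_card sub.
  have c2 := cardsD1 x.1 A; rewrite xA /= in c2.
  have c3 : #|A :\ x.1| < #|A| by rewrite c2 add1n ltnSn.
  have c4 := leq_ltn_trans (leq_trans h2 h3) (leq_ltn_trans c1 c3).
  by rewrite /A cardA ltnn in c4.
set S' := S :\ l.
have hk' : #|S'| <= k by move: hk; rewrite (cardsD1 l S) lS add1n ltnS.
have i0l : (x0.1 == l) = false by rewrite eq_sym (negbTE li0).
have hS' : S' != set0 by apply/set0Pn; exists x0.1; rewrite !inE i0l i0S.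
have h1' : forall x, x \in xs -> x.1 \notin S' -> sf S' x.
  move=> x hx; rewrite !inE negb_and negbK => /orP [/eqP xl | xS].
    by apply: (sf_sub (F1 x hx _)); [rewrite xl | exact: subsetDl].
  exact: sf_sub (h1 x hx xS) (subsetDl _ _).
have [par' [rk' [r' [hr' hpr' hpar' hloc']]]] := IH S' hk' hS' h1'.
have r'l : r' != l by move: hr'; rewrite !inE => /andP[].
exists (fun v => if v == l then x0.1 else par' v),
  (fun v => if v == l then 0 else (rk' v).+1), r'.
split.
- by move: hr'; rewrite !inE => /andP[].
- by rewrite /= (negbTE r'l) hpr'.
- move=> v vS vr /=; case vl: (v == l).
    by rewrite i0l.
  have vS' : v \in S' by rewrite !inE vl vS.
  have [p1 p2] := hpar' v vS' vr.
  move: p1; rewrite !inE => /andP[pl pS].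
  by rewrite (negbTE pl) pS ltnS.
move=> x v hx vS vr /=; case vl: (v == l); last first.
  have vS' : v \in S' by rewrite !inE vl vS.
  exact: hloc' x v hx vS' vr.
move/eqP: vl => ->.
case: (eqVneq x.1 l) => [e|xl]; first by apply: Or32.
case: (eqVneq x.1 x0.1) => [e|xi]; first by apply: Or33.
apply: Or31.
have lx : l != x.1 by rewrite eq_sym.
have ix : x0.1 != x.1 by rewrite eq_sym.
case xS: (x.1 \in S); last by apply: (@sf_same S) => //; apply: h1; rewrite ?xS.
case: (boolP (sf S x)) => hsf; first by apply: (@sf_same S).
have xA : x.1 \notin A by apply: contra hsf => xA; rewrite F1.
have xSg : x.1 \notin Sg by move: xA; rewrite /A inE xS andbT.
have xSg' : x.1 \in Sg' by apply: contraR xSg => h; apply: partS.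
have hl := comp_side hx0 hx ix (_ : l \in side x0 x.1).
rewrite (sideSg' _ xSg') in hl.
by rewrite (notin_side (hval hx) (hl lSg)).
Qed.

End Constr.


Theorem theorem3p6 (n : nat) (hn : 3 <= n) (xs : seq ('I_n * {set 'I_n}))
  (hxs : all (@pconj_valid n) xs) :
  (exists E : {set {set 'I_n}}, hypertree E /\ forall x, x \in xs -> carries E x)
  <-> (forall x y, x \in xs -> y \in xs -> commute_out x y).
Proof.
split.
  by case=> E [hT hc]; apply: forward hxs _ hT hc.
move=> hcom.
have hval : forall x, x \in xs -> x.1 \notin x.2.
  by move=> x hx; case/andP: (allP hxs x hx).
have hcomp : forall x y, x \in xs -> y \in xs -> compat x y.
  move=> [i D] [j F] hx hy; apply: A1; [exact: hval hx | exact: hval hy | exact: hcom].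
have hS : [set: 'I_n] != set0.
  by apply/set0Pn; exists (Ordinal (leq_trans (isT : 0 < 3) hn)).
have h1 : forall x, x \in xs -> x.1 \notin [set: 'I_n] -> sf [set: 'I_n] x.
  by move=> x _; rewrite inE.
have [par [rk [r [_ hpr hpar hloc]]]] :=
  claim hval hcomp (leqnn #|[set: 'I_n]|) hS h1.
have hrk : forall v, v != r -> rk v < rk (par v).
  by move=> v vr; case: (hpar v (in_setT v) vr).
exists (TE par r); split; first exact: TE_hypertree hpr hrk.
move=> [i D] hx; apply: TE_carries => v vr.
exact: hloc (i, D) v hx (in_setT v) vr.
Qed.
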